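(* Fix $p\in(0,1]$ and $\lambda\in\mathbb{R}$. For any fixed $T>0$ and $a\in(0,\frac{p}{1+p})$ there exist $b_{T,a}>0$ and $C_{T,a}>0$ such that for all $b\ge b_{T,a}$ and all $t\in(-\infty,T+ap\log b]$, $$|\Psi_b(t-p\log b)-\Theta_h(t)|\le C_{T,a}\,b^{-2p(1-a)}e^{t/p},$$ and the same bound holds for the $t$-derivatives, i.e. $|\Psi_b'(t-p\log b)-\Theta_h'(t)|\le C_{T,a}b^{-2p(1-a)}e^{t/p}$ on the same interval.
   Context: Let $d=2+\frac2p$. For $b>0$ let $f$ be the unique classical solution of $f''(r)+\frac{d-1}{r}f'(r)-r^2f(r)+\lambda f(r)+|f(r)|^{2p}f(r)=0$ for $r>0$ with $f(0)=b$, $f'(0)=0$. Set $\Psi_b(t)=e^{t/p}f(e^t)$ (Emden--Fowler transformation), which solves $\Psi''-\frac{1}{p^2}\Psi+|\Psi|^{2p}\Psi=-\lambda e^{2t}\Psi+e^{4t}\Psi$ and satisfies $\Psi_b(t)=be^{t/p}\left[1-\frac{p(\lambda+b^{2p})}{4(p+1)}e^{2t}+O(e^{4t})\right]$ as $t\to-\infty$. Let $\Theta_h(t)=\dfrac{e^{t/p}}{(1+\alpha_pe^{2t})^{1/p}}$ with $\alpha_p=\frac{p^2}{4(1+p)}$, the positive homoclinic solution of $\Theta''-\frac1{p^2}\Theta+|\Theta|^{2p}\Theta=0$. *)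

(* Defs.v *)
From Stdlib Require Import Reals.
From Coquelicot Require Import Coquelicot.
Open Scope R_scope.

(* x^y for x >= 0, y > 0, with the convention 0^y = 0 (Rpower 0 y = 1 in Stdlib). *)
Definition rpow0 (x y : R) : R := if Rle_dec x 0 then 0 else Rpower x y.

Definition dim (p : R) : R := 2 + 2 / p.

(* f is a classical (radial) solution on r > 0 of
   f'' + (d-1)/r f' - r^2 f + lambda f + |f|^{2p} f = 0,
   with f(0) = b and f'(0) = 0 (right derivative at 0). *)
Definition is_classical_sol (p lam b : R) (f : R -> R) : Prop :=
  (forall r, 0 < r ->
     ex_derive f r /\ ex_derive (Derive f) r /\
     Derive_n f 2 r + (dim p - 1) / r * Derive f r - r ^ 2 * f r
       + lam * f r + rpow0 (Rabs (f r)) (2 * p) * f r = 0) /\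
  f 0 = b /\
  filterlim (fun h => (f h - f 0) / h) (at_right 0) (locally 0).

Definition Psi (p : R) (f : R -> R) (t : R) : R := exp (t / p) * f (exp t).

Definition alpha (p : R) : R := p ^ 2 / (4 * (1 + p)).

Definition Theta_h (p : R) (t : R) : R :=
  exp (t / p) / Rpower (1 + alpha p * exp (2 * t)) (1 / p).

(* Main.v *)
Require Import Defs.
From Stdlib Require Import Reals Lra.
From Coquelicot Require Import Coquelicot.
Open Scope R_scope.

Lemma exp_le_mono x y : x <= y -> exp x <= exp y.
Proof. intros [H|H]; [left; apply exp_increasing; auto| subst; lra]. Qed.

Lemma mono_deriv (h dh : R -> R) x y : x <= y ->
  (forall s, x <= s <= y -> is_derive h s (dh s)) ->
  (forall s, x < s < y -> 0 <= dh s) -> h x <= h y.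
Proof.
  intros [Hxy|Hxy] Hd Hpos; [|subst; lra].
  destruct (MVT_cor2 h dh x y Hxy) as [c [Hc1 Hc2]].
  { intros c Hc. apply is_derive_Reals. apply Hd; auto. }
  assert (0 <= dh c) by (apply Hpos; auto).
  assert (0 <= dh c * (y - x)) by (apply Rmult_le_pos; lra). lra.
Qed.

Lemma cont_ind (P : R -> Prop) (smax : R) :
  (exists s1, forall s, s < s1 -> P s) ->
  (forall x, x <= smax -> (forall s, s < x -> P s) -> P x) ->
  (forall x, x < smax -> P x -> exists d, 0 < d /\ forall s, x <= s < x + d -> P s) ->
  forall s, s <= smax -> P s.
Proof.
  intros [s1 Hs1] Hb Hc.
  set (E := fun y => y <= smax /\ forall s, s < y -> P s).
  assert (HE : exists y, E y).
  { exists (Rmin s1 smax). split. apply Rmin_r. intros s Hs. apply Hs1.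
    pose proof (Rmin_l s1 smax). lra. }
  assert (Hbd : bound E). { exists smax. intros y [Hy _]. auto. }
  destruct (completeness E Hbd HE) as [m [Hub Hlub]].
  assert (Hbelow : forall s, s < m -> P s).
  { intros s Hs. destruct (Classical_Prop.classic (P s)) as [Hp|Hnp]; auto.
    exfalso. assert (Hup : is_upper_bound E s).
    { intros y [Hy1 Hy2]. destruct (Rle_lt_dec y s); auto.
      exfalso. apply Hnp. apply Hy2. auto. }
    specialize (Hlub s Hup). lra. }
  assert (Hm : m <= smax). { apply Hlub. intros y [Hy _]; auto. }
  assert (Pm : P m) by (apply Hb; auto).
  destruct (Req_dec m smax) as [Heq|Hne].
  - intros s Hs. destruct (Rle_lt_or_eq_dec s smax Hs) as [Hl|He].
    + apply Hbelow; lra.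
    + subst; auto.
  - exfalso. assert (Hlt : m < smax) by lra.
    destruct (Hc m Hlt Pm) as [d [Hd HP]].
    set (y := Rmin (m + d/2) smax).
    assert (Ey : E y).
    { split. apply Rmin_r. intros s Hs.
      destruct (Rlt_le_dec s m). apply Hbelow; auto.
      apply HP. split; auto. unfold y in Hs. pose proof (Rmin_l (m+d/2) smax). lra. }
    specialize (Hub y Ey). unfold y in Hub.
    unfold Rmin in Hub; destruct (Rle_dec (m + d/2) smax); lra.
Qed.

Lemma pw_deriv (e x : R) : 0 < x ->
  is_derive (fun y => exp (e * ln y)) x (e * exp ((e - 1) * ln x)).
Proof.
  intros Hx. auto_derive. lra.
  replace (e * ln x) with ((e - 1) * ln x + ln x) by ring.
  rewrite exp_plus, exp_ln by lra. field. lra.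
Qed.

Lemma lip_pw (e x y M : R) : 1 <= e -> 0 < x -> 0 < y -> x <= M -> y <= M ->
  Rabs (exp (e * ln x) - exp (e * ln y)) <= e * exp ((e - 1) * ln M) * Rabs (x - y).
Proof.
  intros He Hx Hy HxM HyM.
  assert (key : forall u v, 0 < u -> u < v -> v <= M ->
    Rabs (exp (e * ln v) - exp (e * ln u)) <= e * exp ((e - 1) * ln M) * Rabs (v - u)).
  { intros u v Hu Huv HvM.
    destruct (MVT_cor2 (fun y => exp (e * ln y)) (fun y => e * exp ((e - 1) * ln y)) u v Huv)
      as [c [Hc2 Hc1]].
    { intros c Hc. apply is_derive_Reals. apply pw_deriv. lra. }
    rewrite Hc2. rewrite Rabs_mult. apply Rmult_le_compat_r. apply Rabs_pos.
    rewrite Rabs_pos_eq. 2: { apply Rmult_le_pos. lra. left; apply exp_pos. }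
    apply Rmult_le_compat_l. lra. apply exp_le_mono.
    apply Rmult_le_compat_l. lra. apply ln_le; lra. }
  destruct (Rtotal_order x y) as [Hl|[He'|Hg]].
  - rewrite Rabs_minus_sym, (Rabs_minus_sym x y). apply key; lra.
  - subst. unfold Rminus. rewrite !Rplus_opp_r, Rabs_R0. lra.
  - apply key; lra.
Qed.

Definition qf p s := exp (-(1/p) * ln (1 + alpha p * exp (2*s))).
Definition dqf p s := -(2 * alpha p / p) * exp (2*s) / (1 + alpha p * exp (2*s)) * qf p s.
Definition Vq p s := exp ((2/p)*s) * dqf p s.

Lemma alpha_pos p : 0 < p -> 0 < alpha p.
Proof. intros. unfold alpha. apply Rdiv_lt_0_compat. nra. lra. Qed.

Lemma qf_deriv p s : 0 < p -> is_derive (qf p) s (dqf p s).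
Proof.
  intros Hp. pose proof (alpha_pos p Hp). pose proof (exp_pos (2*s)).
  unfold qf, dqf. auto_derive. nra.
  unfold qf. field. split; nra.
Qed.

Lemma Vq_deriv p s : 0 < p ->
  is_derive (Vq p) s (- exp ((2/p+2)*s) * exp ((2*p+1) * ln (qf p s))).
Proof.
  intros Hp. pose proof (alpha_pos p Hp). pose proof (exp_pos (2*s)).
  unfold Vq, dqf, qf. auto_derive. nra.
  rewrite ln_exp.
  set (L := ln (1 + alpha p * exp (2 * s))).
  assert (HL : exp L = 1 + alpha p * exp (2*s)) by (apply exp_ln; nra).
  replace ((2 * p + 1) * (- (1 / p) * L)) with (- (1/p) * L + (-2) * L) by (field; lra).
  rewrite exp_plus.
  replace ((-2) * L) with (- (L + L)) by ring. rewrite exp_Ropp, exp_plus, HL.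
  replace ((2/p+2)*s) with ((2/p)*s + 2*s) by ring. rewrite exp_plus.
  assert (Hw : 1 + alpha p * exp (2*s) <> 0) by nra.
  unfold alpha in Hw |- *. field. repeat split; try lra. pose proof (pow2_ge_0 p). nra.
Qed.

Definition phiF al s := - / (1 + al * exp s).
Definition dphiF al s := al * exp s / (1 + al * exp s)^2.
Definition ddphiF al s := al * exp s * (1 - al * exp s) / (1 + al * exp s)^3.
Definition HF A B s := A + B * exp s ^ 2.
Definition YF al k A B s := exp (k * phiF al s) * HF A B s.
Definition dYF al k A B s :=
  exp (k * phiF al s) * (k * dphiF al s * HF A B s + 2 * B * exp s ^ 2).
Definition ddYF al k A B s :=
  exp (k * phiF al s) * (k * ddphiF al s * HF A B s + k^2 * dphiF al s ^ 2 * HF A B s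
     + 2 * k * dphiF al s * (2 * B * exp s ^ 2) + 4 * B * exp s ^ 2).
Definition WF p al k A B s := exp ((2/p)*s) * dYF al k A B s.
Definition dWF p al k A B s := exp ((2/p)*s) * (ddYF al k A B s + (2/p) * dYF al k A B s).

Lemma YF_deriv al k A B s : 0 < al -> is_derive (YF al k A B) s (dYF al k A B s).
Proof.
  intros Hal. pose proof (exp_pos s).
  unfold YF, dYF, HF, phiF, dphiF. auto_derive. nra.
  field. nra.
Qed.

Lemma dYF_deriv al k A B s : 0 < al -> is_derive (dYF al k A B) s (ddYF al k A B s).
Proof.
  intros Hal. pose proof (exp_pos s).
  unfold dYF, ddYF, HF, phiF, dphiF, ddphiF. auto_derive. repeat split; nra.
  field. nra.
Qed.

Lemma WF_deriv p al k A B s : 0 < al -> 0 < p -> is_derive (WF p al k A B) s (dWF p al k A B s).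
Proof.
  intros Hal Hp. unfold WF, dWF.
  assert (H1 : is_derive (fun s => exp (2/p*s)) s (2/p * exp (2/p*s))).
  { auto_derive; auto; ring. }
  pose proof (is_derive_mult _ _ s _ _ H1 (dYF_deriv al k A B s Hal) (fun n m => Rmult_comm n m)) as H3.
  simpl in H3. unfold mult, plus in H3; simpl in H3.
  replace (exp (2 / p * s) * (ddYF al k A B s + 2 / p * dYF al k A B s))
   with (2 / p * exp (2 / p * s) * dYF al k A B s + exp (2 / p * s) * ddYF al k A B s) by ring.
  exact H3.
Qed.

Lemma poly_key a r : 0 < a <= 1 -> 0 < r ->
  a * r * (1 + a * r)^2 <= (1 + a * r^2)^2.
Proof.
  intros Ha Hr.
  assert (H2 : 2 * a * r <= 1 + a * r^2).
  { assert (0 <= a * (r - 1)^2) by (apply Rmult_le_pos; [lra| apply pow2_ge_0]). nra. }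
  assert (H1 : (1 + a*r)^2 <= 2 * (1 + a * r^2)).
  { assert (a*a*r^2 <= a * r^2) by (assert (0 <= r^2) by nra; nra). nra. }
  assert (0 <= a * r) by nra.
  apply Rle_trans with (a * r * (2 * (1 + a * r^2))).
  apply Rmult_le_compat_l; auto.
  assert (0 <= 1 + a * r^2) by nra. nra.
Qed.

Lemma ineq_i p a c1 r : 0 < p <= 1 -> 0 < a <= 1 -> 0 <= c1 -> 0 < r ->
  c1 * r^2 / (1 + a * r^2)^2 <=
  (c1 / a^2) * (a * r * (1 - a * r) / (1 + a * r)^3 + (2/p) * (a * r / (1 + a * r)^2)).
Proof.
  intros Hp Ha Hc Hr.
  assert (Hd : 0 < 1 + a * r) by nra.
  assert (Hd2 : 0 < 1 + a * r^2) by nra.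
  assert (S1 : a * r / (1 + a*r)^2 <= a * r * (1 - a * r) / (1 + a * r)^3 + (2/p) * (a * r / (1 + a * r)^2)).
  { replace (a * r * (1 - a * r) / (1 + a * r)^3 + (2/p) * (a * r / (1 + a * r)^2))
      with (a * r / (1 + a*r)^2 * (((1 - a*r) + (2/p) * (1 + a*r)) / (1 + a*r))) by (field; lra).
    rewrite <- (Rmult_1_r (a * r / (1 + a*r)^2)) at 1.
    apply Rmult_le_compat_l. apply Rlt_le, Rdiv_lt_0_compat; [nra| apply pow_lt; lra].
    apply Rmult_le_reg_r with (1 + a*r); auto. unfold Rdiv. rewrite Rmult_assoc, Rinv_l by lra.
    assert (2/p >= 2). { apply Rle_ge. apply Rmult_le_reg_r with p. lra. unfold Rdiv. rewrite Rmult_assoc, Rinv_l; lra. }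
    nra. }
  apply Rle_trans with ((c1 / a^2) * (a * r / (1 + a*r)^2)).
  2: { apply Rmult_le_compat_l; auto. apply Rdiv_le_0_compat; auto. apply pow_lt; lra. }
  replace ((c1 / a^2) * (a * r / (1 + a*r)^2)) with (c1 * (r / (a * (1 + a*r)^2))) by (field; lra).
  unfold Rdiv at 1. rewrite Rmult_assoc. apply Rmult_le_compat_l; auto.
  pose proof (poly_key a r Ha Hr).
  apply Rmult_le_reg_r with ((1 + a * r^2)^2 * (a * (1 + a*r)^2)).
  apply Rmult_lt_0_compat. apply pow_lt; lra. apply Rmult_lt_0_compat. lra. apply pow_lt; lra.
  replace (r ^ 2 * / (1 + a * r ^ 2) ^ 2 * ((1 + a * r ^ 2) ^ 2 * (a * (1 + a * r) ^ 2)))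
    with (r * (a * r * (1 + a*r)^2)) by (field; lra).
  replace (r / (a * (1 + a * r) ^ 2) * ((1 + a * r ^ 2) ^ 2 * (a * (1 + a * r) ^ 2)))
    with (r * (1 + a * r^2)^2) by (field; lra).
  apply Rmult_le_compat_l; lra.
Qed.

Lemma phiF_ge al s : 0 < al -> -1 <= phiF al s <= 0.
Proof.
  intros Hal. unfold phiF. pose proof (exp_pos s).
  assert (1 <= 1 + al * exp s) by nra.
  split.
  - apply Ropp_le_contravar. pose proof (Rinv_le_contravar 1 (1 + al * exp s) Rlt_0_1 H0).
    rewrite Rinv_1 in H1. exact H1.
  - assert (0 < / (1 + al * exp s)) by (apply Rinv_0_lt_compat; lra). lra.
Qed.

Lemma barrier p al k A B c1 ph0 s : 0 < p <= 1 -> 0 < al <= 1 -> 0 <= c1 ->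
  k = c1 / al^2 -> 0 <= A -> 0 <= ph0 -> B = ph0 * exp k / 4 ->
  exp (2/p*s) * (exp s ^2 * (c1 / (1 + al * exp s ^2)^2 * YF al k A B s + ph0))
   <= dWF p al k A B s.
Proof.
  intros Hp Hal Hc Hk HA Hph HB.
  assert (Hk0 : 0 <= k). { rewrite Hk. apply Rdiv_le_0_compat; auto. apply pow_lt; lra. }
  unfold dWF, ddYF, dYF, YF.
  apply Rmult_le_compat_l. left; apply exp_pos.
  pose proof (ineq_i p al c1 (exp s) Hp Hal Hc (exp_pos s)) as Hi.
  rewrite <- Hk in Hi. fold (dphiF al s) in Hi. fold (ddphiF al s) in Hi.
  set (r := exp s) in *. set (E := exp (k * phiF al s)).
  set (H := HF A B s). set (d1 := dphiF al s). set (d2 := ddphiF al s).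
  assert (HE : exp (-k) <= E).
  { unfold E. apply exp_le_mono. pose proof (phiF_ge al s (proj1 Hal)). nra. }
  fold d1 d2 in Hi. assert (Hr : 0 < r) by (unfold r; apply exp_pos).
  assert (Ep : 0 < E) by apply exp_pos.
  assert (Bp : 0 <= B). { rewrite HB. pose proof (exp_pos k). nra. }
  assert (r2 : 0 <= r^2) by apply pow2_ge_0.
  assert (Hp0 : 0 <= H). { unfold H, HF. fold r. nra. }
  assert (d1p : 0 <= d1). { unfold d1, dphiF. fold r. apply Rdiv_le_0_compat.
     nra. apply pow_lt. nra. }
  assert (pp : 0 < 2/p). { apply Rdiv_lt_0_compat; lra. }
  replace (E * (k * d2 * H + k ^ 2 * d1 ^ 2 * H + 2 * k * d1 * (2 * B * r ^ 2) + 4 * B * r ^ 2) +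
    2 / p * (E * (k * d1 * H + 2 * B * r ^ 2)))
   with ((E*H)*(k*(d2+2/p*d1)) + E*(4*B*r^2) + (E*(k^2*d1^2*H) + E*(2*k*d1*(2*B*r^2)) + 2/p*(E*(2*B*r^2)))) by ring.
  replace (r ^ 2 * (c1 / (1 + al * r ^ 2) ^ 2 * (E * H) + ph0))
   with ((E*H) * (c1 * r ^ 2 / (1 + al * r ^ 2) ^ 2) + ph0 * r^2) by (field; assert (0 <= al*r^2) by (apply Rmult_le_pos; lra); lra).
  assert (N1 : 0 <= E*(k^2*d1^2*H) + E*(2*k*d1*(2*B*r^2)) + 2/p*(E*(2*B*r^2))).
  { assert (0 <= k^2) by apply pow2_ge_0. assert (0 <= d1^2) by apply pow2_ge_0.
    assert (X1 : 0 <= 2*B*r^2) by (apply Rmult_le_pos; lra).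
    assert (X2 : 0 <= k^2*d1^2*H) by (apply Rmult_le_pos; [apply Rmult_le_pos|]; lra).
    assert (X3 : 0 <= 2*k*d1*(2*B*r^2)) by (apply Rmult_le_pos; [apply Rmult_le_pos; [apply Rmult_le_pos|]|]; lra).
    assert (0 <= E*(k^2*d1^2*H)) by (apply Rmult_le_pos; lra).
    assert (0 <= E*(2*k*d1*(2*B*r^2))) by (apply Rmult_le_pos; lra).
    assert (0 <= 2/p*(E*(2*B*r^2))) by (apply Rmult_le_pos; [|apply Rmult_le_pos]; lra).
    lra. }
  assert (N2 : (E*H) * (c1 * r ^ 2 / (1 + al * r ^ 2) ^ 2) <= (E*H)*(k*(d2+2/p*d1))).
  { apply Rmult_le_compat_l; auto. apply Rmult_le_pos; lra. }
  assert (N3 : ph0 * r^2 <= E*(4*B*r^2)).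
  { assert (ph0 = exp (-k) * (4 * B)). { rewrite HB, exp_Ropp. field. pose proof (exp_pos k); lra. }
    rewrite H0. replace (exp (- k) * (4 * B) * r ^ 2) with (exp (-k) * (4*B*r^2)) by ring.
    apply Rmult_le_compat_r; auto. nra. }
  lra.
Qed.

Lemma exp2 s : exp (2*s) = exp s ^ 2.
Proof. replace (2*s) with (s+s) by ring. rewrite exp_plus. ring. Qed.

Lemma ln_le_x y : 0 <= y -> ln (1 + y) <= y.
Proof.
  intros Hy. rewrite <- (ln_exp y) at 2. apply ln_le. lra. apply exp_ineq1_le.
Qed.

Lemma qf_le1 p s : 0 < p -> qf p s <= 1.
Proof.
  intros Hp. unfold qf. rewrite <- exp_0. apply exp_le_mono.
  pose proof (alpha_pos p Hp). pose proof (exp_pos (2*s)).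
  assert (0 <= ln (1 + alpha p * exp (2*s))). { rewrite <- ln_1. apply ln_le; nra. }
  assert (0 < 1/p) by (apply Rdiv_lt_0_compat; lra). rewrite ?exp_0. nra.
Qed.

Lemma qf_pos p s : 0 < qf p s.
Proof. apply exp_pos. Qed.

Lemma qf_ge p s : 0 < p -> 1 - alpha p * exp (2*s) / p <= qf p s.
Proof.
  intros Hp. pose proof (alpha_pos p Hp). pose proof (exp_pos (2*s)).
  unfold qf. eapply Rle_trans. 2: apply exp_ineq1_le.
  assert (ln (1 + alpha p * exp (2*s)) <= alpha p * exp (2*s)) by (apply ln_le_x; nra).
  assert (0 < 1/p) by (apply Rdiv_lt_0_compat; lra).
  unfold Rdiv. nra.
Qed.

Lemma qf_ge_Z p s Z : 0 < p -> exp (2*s) <= Z -> exp (-(1/p) * ln (1 + alpha p * Z)) <= qf p s.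
Proof.
  intros Hp HZ. pose proof (alpha_pos p Hp). pose proof (exp_pos (2*s)).
  unfold qf. apply exp_le_mono.
  assert (ln (1 + alpha p * exp (2*s)) <= ln (1 + alpha p * Z)) by (apply ln_le; nra).
  assert (0 < 1/p) by (apply Rdiv_lt_0_compat; lra). nra.
Qed.

Lemma qf_pow p s : 0 < p -> exp (2 * p * ln (qf p s)) = / (1 + alpha p * exp (2*s))^2.
Proof.
  intros Hp. pose proof (alpha_pos p Hp). pose proof (exp_pos (2*s)).
  unfold qf. rewrite ln_exp.
  replace (2 * p * (- (1 / p) * ln (1 + alpha p * exp (2 * s))))
    with (- (ln (1 + alpha p * exp (2 * s)) + ln (1 + alpha p * exp (2 * s)))) by (field; lra).
  rewrite exp_Ropp, exp_plus, exp_ln by nra. simpl. f_equal. ring.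
Qed.

Lemma dqf_bound p s : 0 < p -> Rabs (dqf p s) <= 2 * alpha p / p * exp (2*s).
Proof.
  intros Hp. pose proof (alpha_pos p Hp). pose proof (exp_pos (2*s)).
  pose proof (qf_le1 p s Hp). pose proof (qf_pos p s).
  unfold dqf. 
  assert (0 < 2 * alpha p / p) by (apply Rdiv_lt_0_compat; lra).
  assert (0 <= exp (2 * s) / (1 + alpha p * exp (2 * s)) * qf p s <= exp (2*s)).
  { assert (Hw : 1 <= 1 + alpha p * exp (2*s)) by nra.
    assert (Hi1 : 0 < / (1 + alpha p * exp (2 * s))) by (apply Rinv_0_lt_compat; lra).
    assert (Hi2 : / (1 + alpha p * exp (2 * s)) <= 1).
    { pose proof (Rinv_le_contravar 1 _ Rlt_0_1 Hw). rewrite Rinv_1 in H4. exact H4. }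
    unfold Rdiv. split. apply Rmult_le_pos; [apply Rmult_le_pos|]; lra.
    assert (exp (2 * s) * / (1 + alpha p * exp (2 * s)) <= exp (2*s)) by nra.
    assert (0 <= exp (2 * s) * / (1 + alpha p * exp (2 * s))) by nra. nra. }
  replace (- (2 * alpha p / p) * exp (2 * s) / (1 + alpha p * exp (2 * s)) * qf p s)
    with (- (2 * alpha p / p * (exp (2 * s) / (1 + alpha p * exp (2 * s)) * qf p s))) by (field; nra).
  rewrite Rabs_Ropp, Rabs_pos_eq by (apply Rmult_le_pos; lra).
  apply Rmult_le_compat_l; lra.
Qed.

Lemma rpow0_pos p x : 0 < x -> rpow0 (Rabs x) (2*p) * x = exp ((2*p+1) * ln x).
Proof.
  intros Hx. unfold rpow0. rewrite Rabs_pos_eq by lra.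
  destruct (Rle_dec x 0). lra. unfold Rpower.
  replace ((2*p+1) * ln x) with (2*p*ln x + ln x) by ring. rewrite exp_plus, exp_ln; auto.
Qed.

Lemma cont_eps f x l : is_derive f x l ->
  forall e, 0 < e -> exists d, 0 < d /\ forall y, Rabs (y - x) < d -> Rabs (f y - f x) < e.
Proof.
  intros Hd e He. apply is_derive_Reals in Hd.
  assert (Hc : continuity_pt f x) by (apply derivable_continuous_pt; exists l; auto).
  destruct (Hc e He) as [d [Hd1 Hd2]]. exists d. split; auto.
  intros y Hy. destruct (Req_dec y x) as [->|Hne].
  unfold Rminus. rewrite Rplus_opp_r, Rabs_R0. auto.
  apply (Hd2 y). split. split. exact I. auto. simpl. unfold R_dist. auto.
Qed.

Lemma dphiF_bd al s : 0 < al -> 0 <= dphiF al s <= 1.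
Proof.
  intros Hal. unfold dphiF. pose proof (exp_pos s).
  assert (0 < al * exp s) by nra.
  assert (0 < (1 + al * exp s)^2) by (apply pow_lt; lra).
  split. apply Rdiv_le_0_compat; lra.
  apply Rmult_le_reg_r with ((1 + al * exp s)^2); auto.
  unfold Rdiv. rewrite Rmult_assoc, Rinv_l by lra. nra.
Qed.

Lemma expk_bd al k s : 0 < al -> 0 <= k -> exp (-k) <= exp (k * phiF al s) <= 1.
Proof.
  intros Hal Hk. pose proof (phiF_ge al s Hal). split; apply exp_le_mono || idtac.
  nra. apply Rle_trans with (exp 0). apply exp_le_mono; nra. rewrite exp_0; lra.
Qed.

Lemma YF_le al k A B Z s : 0 < al -> 0 <= k -> 0 <= A -> 0 <= B -> exp s ^ 2 <= Z ->
  YF al k A B s <= A + B * Z.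
Proof.
  intros Hal Hk HA HB HZ. unfold YF, HF. pose proof (expk_bd al k s Hal Hk).
  assert (0 <= exp s ^2) by apply pow2_ge_0.
  assert (A + B * exp s ^ 2 <= A + B * Z) by nra.
  assert (0 <= A + B * exp s ^ 2) by nra. nra.
Qed.

Lemma YF_ge al k A B s : 0 < al -> 0 <= k -> 0 <= A -> 0 <= B ->
  exp (-k) * A <= YF al k A B s.
Proof.
  intros Hal Hk HA HB. unfold YF, HF. pose proof (expk_bd al k s Hal Hk).
  assert (0 <= exp s ^2) by apply pow2_ge_0. pose proof (exp_pos (-k)).
  assert (0 <= B * exp s ^2) by nra. nra.
Qed.

Lemma dYF_bd al k A B Z s : 0 < al -> 0 <= k -> 0 <= A -> 0 <= B -> exp s ^ 2 <= Z ->
  0 <= dYF al k A B s <= k * (A + B * Z) + 2 * B * Z.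
Proof.
  intros Hal Hk HA HB HZ. unfold dYF, HF. pose proof (expk_bd al k s Hal Hk).
  pose proof (dphiF_bd al s Hal).
  assert (0 <= exp s ^2) by apply pow2_ge_0.
  assert (0 <= A + B * exp s ^ 2) by nra.
  assert (A + B * exp s ^ 2 <= A + B * Z) by nra.
  assert (0 <= k * dphiF al s * (A + B * exp s ^ 2)) by (apply Rmult_le_pos; nra).
  assert (k * dphiF al s * (A + B * exp s ^ 2) <= k * (A + B * Z)).
  { apply Rle_trans with (k * 1 * (A + B * exp s ^ 2)).
    apply Rmult_le_compat_r; auto. apply Rmult_le_compat_l; lra. nra. }
  assert (2 * B * exp s ^ 2 <= 2 * B * Z) by nra.
  set (E := exp (k * phiF al s)) in *.
  set (X := k * dphiF al s * (A + B * exp s ^ 2) + 2 * B * exp s ^ 2).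
  assert (0 <= 2 * B * exp s ^ 2) by (apply Rmult_le_pos; lra).
  assert (0 <= X) by (unfold X; lra).
  assert (X <= k * (A + B * Z) + 2 * B * Z) by (unfold X; lra).
  split. apply Rmult_le_pos; [unfold E; left; apply exp_pos|lra]. apply Rle_trans with X; [|lra]. rewrite <- (Rmult_1_l X) at 2. apply Rmult_le_compat_r; lra.
Qed.

Definition NN p x := rpow0 (Rabs x) (2*p) * x.

Lemma le_eps a b : (forall e, 0 < e -> a <= b + e) -> a <= b.
Proof.
  intros H. destruct (Rle_lt_dec a b); auto.
  specialize (H ((a - b)/2)). lra.
Qed.

Lemma small_exp c : 0 < c -> exists s1, s1 <= 0 /\ forall s, s <= s1 -> exp (2*s) <= c.
Proof.
  intros Hc. exists (Rmin 0 (ln c / 2)). split. apply Rmin_l.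
  intros s Hs. pose proof (Rmin_r 0 (ln c / 2)).
  rewrite <- (exp_ln c) by auto. apply exp_le_mono. lra.
Qed.

Lemma alpha_le1 p : 0 < p <= 1 -> alpha p <= 1.
Proof.
  intros Hp. unfold alpha. apply Rmult_le_reg_r with (4*(1+p)). lra.
  unfold Rdiv. rewrite Rmult_assoc, Rinv_l by lra. nra.
Qed.

Lemma exp_2pln2 p : 0 < p <= 1 -> exp (2*p*ln 2) <= 4.
Proof.
  intros Hp. assert (0 < ln 2) by (rewrite <- ln_1; apply ln_increasing; lra).
  apply Rle_trans with (exp (2 * ln 2)). apply exp_le_mono. nra.
  replace (2 * ln 2) with (ln 2 + ln 2) by ring. rewrite exp_plus, exp_ln; lra.
Qed.

Lemma abs_le_inv x a : Rabs x <= a -> - a <= x <= a.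
Proof. unfold Rabs. destruct (Rcase_abs x); lra. Qed.

Lemma pointD p lam eps Z t Gt Yt : 0 < p <= 1 -> 0 < eps <= 1 -> exp (2*t) <= Z ->
  0 <= Yt -> Yt < qf p t -> Rabs (Gt - qf p t) < Yt ->
  Rabs (exp ((2/p+2)*t) * (eps^2 * exp (2*t) * Gt - eps * lam * Gt - NN p Gt)
        - (- exp ((2/p+2)*t) * exp ((2*p+1) * ln (qf p t))))
  <= exp (2/p*t) * (exp t ^2 * (4*(2*p+1) / (1 + alpha p * exp t ^2)^2 * Yt
        + 2*(eps^2*Z + eps*Rabs lam))).
Proof.
  intros Hp He HZ HY HYq Hu.
  set (q := qf p t) in *. set (z := exp (2*t)) in *.
  assert (Hq1 : q <= 1) by (apply qf_le1; lra).
  assert (Hq0 : 0 < q) by apply qf_pos.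
  assert (HG0 : 0 < Gt) by (apply Rabs_def2 in Hu; lra).
  assert (HG2 : Gt <= 2 * q) by (apply Rabs_def2 in Hu; lra).
  assert (Hz : 0 < z) by apply exp_pos.
  rewrite <- exp2. fold z.
  replace ((2/p+2)*t) with (2/p*t + 2*t) by ring. rewrite exp_plus. fold z.
  unfold NN. rewrite rpow0_pos by auto.
  replace (exp (2 / p * t) * z * (eps ^ 2 * z * Gt - eps * lam * Gt - exp ((2 * p + 1) * ln Gt)) -
   - (exp (2 / p * t) * z) * exp ((2 * p + 1) * ln q))
   with (exp (2 / p * t) * (z * ((eps ^ 2 * z - eps * lam) * Gt - (exp ((2 * p + 1) * ln Gt) - exp ((2 * p + 1) * ln q))))) by ring.
  rewrite Rabs_mult, Rabs_pos_eq by (left; apply exp_pos).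
  apply Rmult_le_compat_l. left; apply exp_pos.
  rewrite Rabs_mult, Rabs_pos_eq by lra.
  apply Rmult_le_compat_l. lra.
  eapply Rle_trans. apply Rabs_triang. rewrite Rabs_Ropp.
  rewrite Rplus_comm. apply Rplus_le_compat.
  -
    eapply Rle_trans. apply (lip_pw (2*p+1) Gt q (2*q)); lra.
    replace (2 * p + 1 - 1) with (2*p) by ring.
    rewrite ln_mult by lra. rewrite Rmult_plus_distr_l, exp_plus.
    unfold q. rewrite qf_pow by lra. fold q. fold z.
    pose proof (exp_2pln2 p Hp).
    assert (Hw : 0 < (1 + alpha p * z)^2). { apply pow_lt. pose proof (alpha_pos p (proj1 Hp)). nra. }
    assert (Hiw : 0 < / (1 + alpha p * z)^2) by (apply Rinv_0_lt_compat; auto).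
    assert (Ha : Rabs (Gt - q) <= Yt) by lra.
    unfold Rdiv. rewrite (Rmult_comm 4 (2*p+1)) at 1.
    assert (X : 0 <= exp (2 * p * ln 2) * / (1 + alpha p * z) ^ 2 * Rabs (Gt - q)).
    { apply Rmult_le_pos. apply Rmult_le_pos. left; apply exp_pos. lra. apply Rabs_pos. }
    assert (exp (2 * p * ln 2) * / (1 + alpha p * z) ^ 2 * Rabs (Gt - q) <= 4 * / (1 + alpha p * z) ^ 2 * Yt).
    { apply Rmult_le_compat. apply Rmult_le_pos. left; apply exp_pos. lra. apply Rabs_pos.
      apply Rmult_le_compat_r; lra. auto. }
    replace ((2 * p + 1) * (exp (2 * p * ln 2) * / (1 + alpha p * z) ^ 2) * Rabs (Gt - q))
      with ((2*p+1) * (exp (2 * p * ln 2) * / (1 + alpha p * z) ^ 2 * Rabs (Gt - q))) by ring.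
    replace ((2 * p + 1) * 4 * / (1 + alpha p * z) ^ 2 * Yt)
      with ((2*p+1) * (4 * / (1 + alpha p * z) ^ 2 * Yt)) by ring.
    apply Rmult_le_compat_l; lra.
  - rewrite Rabs_mult.
    assert (Rabs Gt <= 2) by (rewrite Rabs_pos_eq; lra).
    assert (Rabs (eps ^ 2 * z - eps * lam) <= eps^2 * Z + eps * Rabs lam).
    { eapply Rle_trans. apply Rabs_triang. rewrite Rabs_Ropp, !Rabs_mult.
      rewrite (Rabs_pos_eq eps), (Rabs_pos_eq z), (Rabs_pos_eq (eps^2)) by (try apply pow2_ge_0; lra).
      apply Rplus_le_compat_r. apply Rmult_le_compat_l; [apply pow2_ge_0|lra]. }
    assert (0 <= eps^2 * Z + eps * Rabs lam).
    { pose proof (Rabs_pos lam). assert (0 <= eps^2) by apply pow2_ge_0. nra. }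
    replace (2 * (eps ^ 2 * Z + eps * Rabs lam)) with ((eps ^ 2 * Z + eps * Rabs lam) * 2) by ring.
    apply Rmult_le_compat; auto; apply Rabs_pos.
Qed.

Lemma core (p lam eps A Z smax : R) (G dG : R -> R) :
  0 < p <= 1 -> 0 < eps <= 1 -> 0 < A -> exp (2*smax) <= Z ->
  A + (2*(eps^2*Z + eps*Rabs lam)) * exp (4*(2*p+1) / alpha p ^2) / 4 * Z
     < exp (-(1/p) * ln (1 + alpha p * Z)) ->
  (forall s, is_derive G s (dG s)) ->
  (forall s, is_derive (fun s => exp (2/p*s) * dG s) s
       (exp ((2/p+2)*s) * (eps^2 * exp (2*s) * G s - eps * lam * G s - NN p (G s)))) ->
  (forall e, 0 < e -> exists s1, forall s, s <= s1 -> Rabs (G s - 1) <= e) ->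
  (forall e, 0 < e -> exists s1, forall s, s <= s1 -> Rabs (exp (2/p*s) * dG s) <= e) ->
  forall s, s <= smax ->
    Rabs (G s - qf p s) <= A + (2*(eps^2*Z + eps*Rabs lam)) * exp (4*(2*p+1) / alpha p ^2) / 4 * Z /\
    Rabs (dG s - dqf p s) <= (4*(2*p+1) / alpha p ^2) * (A + (2*(eps^2*Z + eps*Rabs lam)) * exp (4*(2*p+1) / alpha p ^2) / 4 * Z)
         + 2 * ((2*(eps^2*Z + eps*Rabs lam)) * exp (4*(2*p+1) / alpha p ^2) / 4) * Z.
Proof.
  intros Hp He HA HZ.
  set (al := alpha p). set (c1 := 4*(2*p+1)). set (k := c1 / al^2).
  set (ph0 := 2*(eps^2*Z + eps*Rabs lam)). set (B := ph0 * exp k / 4).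
  intros Hgap HG HV HG1 HV0.
  assert (HZ0 : 0 < Z) by (pose proof (exp_pos (2*smax)); lra).
  assert (Hal : 0 < al <= 1) by (split; [apply alpha_pos; lra| apply alpha_le1; lra]).
  assert (Hc1 : 0 <= c1) by (unfold c1; lra).
  assert (Hk : 0 <= k) by (unfold k; apply Rdiv_le_0_compat; [lra| apply pow_lt; lra]).
  assert (Hph : 0 <= ph0). { unfold ph0. pose proof (Rabs_pos lam). assert (0 <= eps^2) by apply pow2_ge_0. nra. }
  assert (HB : 0 <= B). { unfold B. pose proof (exp_pos k). nra. }
  set (qmin := exp (-(1/p) * ln (1 + al * Z))).
  set (u := fun s => G s - qf p s).
  set (Y := YF al k A B). set (dY := dYF al k A B). set (W := WF p al k A B).
  assert (Hqmin : forall s, s <= smax -> qmin <= qf p s).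
  { intros s Hs. apply qf_ge_Z. lra. eapply Rle_trans; [|apply HZ]. apply exp_le_mono; lra. }
  assert (HZs : forall s, s <= smax -> exp s ^ 2 <= Z).
  { intros s Hs. rewrite <- exp2. eapply Rle_trans; [|apply HZ]. apply exp_le_mono; lra. }
  assert (HYle : forall s, s <= smax -> Y s <= A + B * Z).
  { intros s Hs. apply YF_le; auto; lra. }
  assert (HYge : forall s, exp (-k) * A <= Y s).
  { intros s. apply YF_ge; lra. }
  assert (HYpos : forall s, 0 < Y s).
  { intros s. pose proof (HYge s). pose proof (exp_pos (-k)). nra. }
  assert (U0 : forall e, 0 < e -> exists s1, forall s, s <= s1 -> Rabs (u s) <= e).
  { intros e He0. destruct (HG1 (e/2)) as [s1 Hs1]. lra.
    destruct (small_exp (e*p/(2*al))) as [s2 [_ Hs2]].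
    { apply Rdiv_lt_0_compat; nra. }
    exists (Rmin s1 s2). intros s Hs. pose proof (Rmin_l s1 s2). pose proof (Rmin_r s1 s2).
    specialize (Hs1 s ltac:(lra)). specialize (Hs2 s ltac:(lra)).
    pose proof (qf_le1 p s ltac:(lra)). pose proof (qf_ge p s ltac:(lra)). fold al in H2.
    assert (al * exp (2 * s) / p <= e/2).
    { apply Rmult_le_reg_r with p. lra. unfold Rdiv. rewrite Rmult_assoc, Rinv_l by lra.
      apply Rmult_le_reg_r with (/ al). apply Rinv_0_lt_compat; lra.
      replace (al * exp (2 * s) * 1 * / al) with (exp (2*s)) by (field; lra).
      replace (e * / 2 * p * / al) with (e * p / (2 * al)) by (field; lra). auto. }
    unfold u. apply abs_le_inv in Hs1. apply Rabs_le. lra. }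
  assert (V0 : forall e, 0 < e -> exists s1, forall s, s <= s1 ->
             Rabs (exp (2/p*s) * dG s - Vq p s) <= e).
  { intros e He0. destruct (HV0 (e/2)) as [s1 Hs1]. lra.
    destruct (small_exp (e*p/(4*al))) as [s2 [Hs20 Hs2]].
    { apply Rdiv_lt_0_compat; nra. }
    exists (Rmin s1 s2). intros s Hs. pose proof (Rmin_l s1 s2). pose proof (Rmin_r s1 s2).
    specialize (Hs1 s ltac:(lra)). specialize (Hs2 s ltac:(lra)).
    pose proof (dqf_bound p s ltac:(lra)) as Hd. fold al in Hd.
    assert (He1 : exp (2/p*s) <= 1).
    { rewrite <- exp_0. apply exp_le_mono. assert (0 < 2/p) by (apply Rdiv_lt_0_compat; lra). nra. }
    assert (Hvq : Rabs (Vq p s) <= e/2).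
    { unfold Vq. rewrite Rabs_mult, Rabs_pos_eq by (left; apply exp_pos).
      apply Rle_trans with (1 * (2 * al / p * exp (2 * s))).
      apply Rmult_le_compat; auto. left; apply exp_pos. apply Rabs_pos.
      rewrite Rmult_1_l.
      apply Rmult_le_reg_r with p. lra. unfold Rdiv. 
      replace (2 * al * / p * exp (2 * s) * p) with (2 * al * exp (2*s)) by (field; lra).
      apply Rmult_le_reg_r with (/ (2*al)). apply Rinv_0_lt_compat; lra.
      replace (2 * al * exp (2 * s) * / (2 * al)) with (exp (2*s)) by (field; lra).
      replace (e * / 2 * p * / (2 * al)) with (e * p / (4 * al)) by (field; lra). auto. }
    eapply Rle_trans. apply Rabs_triang. rewrite Rabs_Ropp. lra. }
  assert (Hu' : forall s, is_derive u s (dG s - dqf p s)).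
  { intros s. unfold u. apply (is_derive_minus G (qf p)). auto. apply qf_deriv; lra. }
  assert (HVu' : forall s, is_derive (fun s => exp (2/p*s) * dG s - Vq p s) s
     (exp ((2/p+2)*s) * (eps^2 * exp (2*s) * G s - eps * lam * G s - NN p (G s))
       - (- exp ((2/p+2)*s) * exp ((2*p+1) * ln (qf p s))))).
  { intros s. apply (is_derive_minus (fun s => exp (2/p*s) * dG s) (Vq p)). auto. apply Vq_deriv; lra. }
  assert (C1 : forall x, x <= smax -> (forall t, t < x -> Rabs (u t) < Y t) ->
             forall s, s <= x -> Rabs (dG s - dqf p s) <= dY s).
  { intros x Hx HP s Hs.
    set (Vu := fun t => exp (2/p*t) * dG t - Vq p t).
    assert (Dpos : forall t, t < s -> Rabs (exp ((2/p+2)*t) * (eps^2 * exp (2*t) * G t - eps * lam * G t - NN p (G t))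
       - (- exp ((2/p+2)*t) * exp ((2*p+1) * ln (qf p t)))) <= dWF p al k A B t).
    { intros t Ht. eapply Rle_trans. apply (pointD p lam eps Z t (G t) (Y t)); try lra.
      eapply Rle_trans; [|apply HZ]. apply exp_le_mono; lra.
      left; apply HYpos. eapply Rle_lt_trans. apply HYle; lra.
      eapply Rlt_le_trans. apply Hgap. apply Hqmin; lra. apply HP; lra.
      apply (barrier p al k A B c1 ph0 t); try lra; reflexivity. }
    assert (HW : Rabs (Vu s) <= W s).
    { assert (Hside : forall sg : R, sg = 1 \/ sg = -1 -> sg * Vu s <= W s).
      { intros sg Hsg. apply le_eps. intros eta Heta.
        destruct (V0 eta Heta) as [s1 Hs1].
        set (sig := Rmin s1 (s-1)). assert (Hsig1 : sig <= s1) by apply Rmin_l.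
        assert (Hsig2 : sig <= s - 1) by apply Rmin_r.
        assert (Hmono : W sig - sg * Vu sig <= W s - sg * Vu s).
        { apply (mono_deriv (fun t => W t - sg * Vu t)
             (fun t => dWF p al k A B t - sg * (exp ((2/p+2)*t) * (eps^2 * exp (2*t) * G t - eps * lam * G t - NN p (G t))
       - (- exp ((2/p+2)*t) * exp ((2*p+1) * ln (qf p t)))))). lra.
          - intros t Ht. apply (is_derive_minus W (fun t => sg * Vu t)). apply WF_deriv; lra.
            apply (is_derive_scal (fun t => Vu t) t sg). apply HVu'.
          - intros t Ht. specialize (Dpos t ltac:(lra)). apply abs_le_inv in Dpos.
            destruct Hsg as [->| ->]; lra. }
        assert (HWs : 0 <= W sig).
        { unfold W, WF. apply Rmult_le_pos. left; apply exp_pos.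
          apply (dYF_bd al k A B Z sig); try lra. apply HZs. lra. }
        specialize (Hs1 sig Hsig1). apply abs_le_inv in Hs1. fold (Vu sig) in Hs1.
        destruct Hsg as [->| ->]; lra. }
      pose proof (Hside 1 (or_introl eq_refl)). pose proof (Hside (-1) (or_intror eq_refl)).
      apply Rabs_le. lra. }
    unfold Vu, Vq, W, WF in HW. fold (dY s) in HW.
    rewrite <- Rmult_minus_distr_l, Rabs_mult, Rabs_pos_eq in HW by (left; apply exp_pos).
    apply Rmult_le_reg_l with (exp (2/p*s)). apply exp_pos. auto. }
  assert (Main : forall s, s <= smax -> Rabs (u s) < Y s).
  { assert (Hek : 0 < exp (-k) * A / 2). { pose proof (exp_pos (-k)). apply Rdiv_lt_0_compat; nra. }
    destruct (U0 _ Hek) as [s0 Hs0].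
    apply (cont_ind (fun t => Rabs (u t) < Y t) smax).
    - exists s0. intros t Ht. specialize (Hs0 t ltac:(lra)). specialize (HYge t). lra.
    - intros x Hx HP. pose proof (C1 x Hx HP) as Hd.
      set (sig := Rmin s0 (x-1)). assert (Hsig1 : sig <= s0) by apply Rmin_l.
      assert (Hsig2 : sig <= x - 1) by apply Rmin_r.
      assert (Hside : forall sg : R, sg = 1 \/ sg = -1 -> Y sig - sg * u sig <= Y x - sg * u x).
      { intros sg Hsg. apply (mono_deriv (fun t => Y t - sg * u t) (fun t => dY t - sg * (dG t - dqf p t))). lra.
        - intros t Ht. apply (is_derive_minus Y (fun t => sg * u t)). apply YF_deriv; lra.
          apply (is_derive_scal (fun t => u t) t sg). apply Hu'.
        - intros t Ht. specialize (Hd t ltac:(lra)). apply abs_le_inv in Hd.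
          destruct Hsg as [->| ->]; lra. }
      pose proof (Hside 1 (or_introl eq_refl)). pose proof (Hside (-1) (or_intror eq_refl)).
      specialize (Hs0 sig Hsig1). apply abs_le_inv in Hs0. specialize (HYge sig).
      apply Rabs_def1; lra.
    - intros x Hx Px.
      set (d0 := Y x - Rabs (u x)).
      assert (Hd0 : 0 < d0) by (unfold d0; lra).
      destruct (cont_eps u x _ (Hu' x) (d0/2)) as [d1 [Hd1 Hc1']]. lra.
      destruct (cont_eps Y x _ (YF_deriv al k A B x (proj1 Hal)) (d0/2)) as [d2 [Hd2 Hc2]]. lra.
      exists (Rmin d1 d2). split. apply Rmin_pos; auto.
      intros t Ht. pose proof (Rmin_l d1 d2). pose proof (Rmin_r d1 d2).
      assert (Rabs (t - x) < d1) by (rewrite Rabs_pos_eq; lra).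
      assert (Rabs (t - x) < d2) by (rewrite Rabs_pos_eq; lra).
      specialize (Hc1' t ltac:(auto)). specialize (Hc2 t ltac:(auto)).
      apply Rabs_def2 in Hc2.
      pose proof (Rabs_triang_inv (u t) (u x)). unfold d0 in *. lra. }
  intros s Hs. split.
  - left. eapply Rlt_le_trans. apply Main; auto. apply HYle; auto.
  - eapply Rle_trans. apply (C1 s Hs). intros t Ht. apply Main; lra. lra.
    apply (dYF_bd al k A B Z s); try lra. apply HZs; auto.
Qed.

Lemma rpow0_scale p b y : 0 < b ->
  rpow0 (Rabs (b*y)) (2*p) * (b*y) = exp (2*p*ln b) * b * (rpow0 (Rabs y) (2*p) * y).
Proof.
  intros Hb. destruct (Req_dec y 0) as [->|Hy].
  - rewrite !Rmult_0_r. ring.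
  - unfold rpow0. rewrite Rabs_mult, (Rabs_pos_eq b) by lra.
    assert (0 < Rabs y) by (apply Rabs_pos_lt; auto).
    destruct (Rle_dec (b * Rabs y) 0). nra. destruct (Rle_dec (Rabs y) 0). lra.
    unfold Rpower. rewrite ln_mult by lra. rewrite Rmult_plus_distr_l, exp_plus. ring.
Qed.

Lemma ode_setup p lam b f : 0 < p -> 0 < b -> is_classical_sol p lam b f ->
  (forall s, is_derive (fun s => f (exp (-p*ln b) * exp s) / b) s
                       (exp (-p*ln b) * exp s / b * Derive f (exp (-p*ln b) * exp s))) /\
  (forall s, is_derive (fun s => exp (2/p*s) * (exp (-p*ln b) * exp s / b * Derive f (exp (-p*ln b) * exp s))) s
      (exp ((2/p+2)*s) * (exp (-2*p*ln b)^2 * exp (2*s) * (f (exp (-p*ln b) * exp s) / b)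
          - exp (-2*p*ln b) * lam * (f (exp (-p*ln b) * exp s) / b)
          - NN p (f (exp (-p*ln b) * exp s) / b)))).
Proof.
  intros Hp Hb [Hode _].
  set (c := exp (-p*ln b)).
  assert (Hc : 0 < c) by apply exp_pos.
  split.
  - intros s. assert (Hr : 0 < c * exp s) by (pose proof (exp_pos s); nra).
    destruct (Hode _ Hr) as [[df Hdf] _].
    pose proof (Derive_correct f _ (ex_intro _ df Hdf)) as HD.
    auto_derive. exists df; exact Hdf. change (c * (1 * exp s) * Derive f (c * exp s) * / b = c * exp s / b * Derive f (c * exp s) :> R). field; lra.
  - intros s. assert (Hr : 0 < c * exp s) by (pose proof (exp_pos s); nra).
    destruct (Hode _ Hr) as [[df Hdf] [[ddf Hddf] Heq]].
    auto_derive. exists ddf; exact Hddf.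
    set (r := c * exp s) in *.
    change (Derive (fun x : R => Derive f x) r) with (Derive_n f 2 r).
    assert (HD2 : Derive_n f 2 r = - ((dim p - 1) / r * Derive f r) + r ^ 2 * f r - lam * f r
       - rpow0 (Rabs (f r)) (2 * p) * f r) by lra.
    rewrite HD2.
    replace (rpow0 (Rabs (f r)) (2 * p) * f r) with (rpow0 (Rabs (b * (f r / b))) (2 * p) * (b * (f r / b)))
      by (f_equal; [f_equal; f_equal|]; field; lra).
    rewrite rpow0_scale by lra. fold (NN p (f r / b)).
    assert (Hc2 : c^2 = exp (-2*p*ln b)).
    { unfold c. simpl. rewrite Rmult_1_r, <- exp_plus. f_equal. ring. }
    assert (Hcb : exp (2*p*ln b) * exp (-2*p*ln b) = 1).
    { rewrite <- exp_plus. replace (2 * p * ln b + -2 * p * ln b) with 0 by ring. apply exp_0. }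
    rewrite <- Hc2.
    replace ((2/p+2)*s) with (2/p*s + 2*s) by ring. rewrite exp_plus, exp2.
    unfold r. unfold dim. 
    replace (exp (2 * p * ln b)) with (/ c^2) by (rewrite Hc2; field_simplify_eq; [lra| pose proof (exp_pos (-2*p*ln b)); lra]).
    field. repeat split; try lra. pose proof (exp_pos s); lra.
Qed.

Lemma sing (G dG : R -> R) k0 k1 M s1 :
  0 < k0 -> 0 < k1 -> 0 <= M -> s1 <= 0 ->
  (forall s, is_derive G s (dG s)) ->
  (forall sg s, sg <= s -> s <= s1 -> Rabs (exp (k0*s) * dG s - exp (k0*sg) * dG sg) <= M * exp (k1 * s)) ->
  (forall sg s, sg <= s1 -> s <= s1 -> Rabs (G s - G sg) <= 1) ->
  forall e, 0 < e -> exists s2, forall s, s <= s2 -> Rabs (exp (k0*s) * dG s) <= e.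
Proof.
  intros Hk0 Hk1 HM Hs1 HG HV HGb e He.
  set (c := e / (2*(M+1))). assert (Hc : 0 < c) by (unfold c; apply Rdiv_lt_0_compat; lra).
  exists (Rmin s1 (ln c / k1)). intros s0 Hs0.
  pose proof (Rmin_l s1 (ln c / k1)). pose proof (Rmin_r s1 (ln c / k1)).
  assert (Hex : M * exp (k1 * s0) <= e/2).
  { assert (exp (k1 * s0) <= c).
    { rewrite <- (exp_ln c) by auto. apply exp_le_mono.
      apply Rmult_le_reg_r with (/k1). apply Rinv_0_lt_compat; auto.
      replace (k1 * s0 * / k1) with s0 by (field; lra). unfold Rdiv in H0. lra. }
    apply Rle_trans with ((M+1) * c). pose proof (exp_pos (k1*s0)). nra.
    unfold c. right. field. lra. }
  set (V := fun s => exp (k0*s) * dG s).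
  destruct (Rle_lt_dec (Rabs (V s0)) e) as [Hok|Hbad]. auto.
  exfalso.
  assert (Hsg : exists sg, (sg = 1 \/ sg = -1) /\ e < sg * V s0).
  { unfold Rabs in Hbad. destruct (Rcase_abs (V s0)).
    exists (-1). split; [right; auto| lra]. exists 1. split; [left; auto| lra]. }
  destruct Hsg as [sg [Hsg Hsgv]].
  assert (Hbelow : forall sgm, sgm <= s0 -> e/2 <= sg * V sgm).
  { intros sgm Hsig. specialize (HV sgm s0 Hsig ltac:(lra)). fold (V s0) (V sgm) in HV.
    apply abs_le_inv in HV. destruct Hsg as [->| ->]; lra. }
  set (K := e / (2*k0)). assert (HK : 0 < K) by (unfold K; apply Rdiv_lt_0_compat; lra).
  assert (Hmono : forall sgm, sgm <= s0 -> sg * G sgm + K * exp (-k0*sgm) <= sg * G s0 + K * exp (-k0*s0)).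
  { intros sgm Hsig.
    apply (mono_deriv (fun t => sg * G t + K * exp (-k0*t)) (fun t => sg * dG t + K * (-k0 * exp (-k0*t)))); auto.
    - intros t Ht. apply (is_derive_plus (fun t => sg * G t) (fun t => K * exp (-k0*t))).
      apply (is_derive_scal (fun t => G t) t sg). apply HG.
      apply (is_derive_scal (fun t => exp (-k0*t)) t K). auto_derive. auto. ring.
    - intros t Ht. specialize (Hbelow t ltac:(lra)). unfold V in Hbelow.
      assert (dG t = exp (-k0*t) * (exp (k0*t) * dG t)).
      { rewrite <- Rmult_assoc, <- exp_plus. replace (-k0*t + k0*t) with 0 by ring. rewrite exp_0; ring. }
      rewrite H1. pose proof (exp_pos (-k0*t)).
      assert (sg * (exp (- k0 * t) * (exp (k0 * t) * dG t)) = exp (-k0*t) * (sg * (exp (k0 * t) * dG t))) by ring.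
      rewrite H3.
      assert (e / 2 * exp (-k0*t) <= exp (-k0*t) * (sg * (exp (k0 * t) * dG t))) by (rewrite (Rmult_comm (e/2)); apply Rmult_le_compat_l; lra).
      replace (K * (- k0 * exp (- k0 * t))) with (- (e/2 * exp (-k0*t))) by (unfold K; field; lra).
      lra. }
  set (R := (1 + K * exp (-k0*s0)) / K + 1).
  assert (HR : 1 <= R). { unfold R. pose proof (exp_pos (-k0*s0)). assert (0 < (1 + K * exp (- k0 * s0)) / K) by (apply Rdiv_lt_0_compat; nra). lra. }
  set (sgm := s0 - ln R / k0).
  assert (Hlr : 0 <= ln R) by (rewrite <- ln_1; apply ln_le; lra).
  assert (Hsig : sgm <= s0) by (unfold sgm; assert (0 <= ln R / k0) by (apply Rdiv_le_0_compat; lra); lra).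
  specialize (Hmono sgm Hsig).
  assert (Hexp : exp (-k0*sgm) = exp (-k0*s0) * R).
  { unfold sgm. replace (- k0 * (s0 - ln R / k0)) with (-k0*s0 + ln R) by (field; lra).
    rewrite exp_plus, exp_ln; lra. }
  assert (He0 : 1 <= exp (-k0*s0)). { rewrite <- exp_0. apply exp_le_mono. nra. }
  specialize (HGb sgm s0 ltac:(lra) ltac:(lra)). apply abs_le_inv in HGb.
  assert (sg * (G s0 - G sgm) <= 1) by (destruct Hsg as [->| ->]; lra).
  rewrite Hexp in Hmono.
  assert (K * R > 1 + K * exp (-k0*s0)).
  { unfold R. replace (K * ((1 + K * exp (- k0 * s0)) / K + 1)) with (1 + K * exp (-k0*s0) + K) by (field; lra). lra. }
  assert (K * (exp (-k0*s0) * R) >= K * R) by (apply Rle_ge; apply Rmult_le_compat_l; [lra|]; rewrite <- (Rmult_1_l R) at 1; apply Rmult_le_compat_r; lra).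
  nra.
Qed.

Lemma G_to_1 p lam b f c : 0 < b -> 0 < c -> is_classical_sol p lam b f ->
  forall e, 0 < e -> exists s1, forall s, s <= s1 -> Rabs (f (c * exp s) / b - 1) <= e.
Proof.
  intros Hb Hc [_ [Hf0 Hlim]] e He.
  destruct (proj1 (filterlim_locally _ _) Hlim (mkposreal 1 Rlt_0_1)) as [d Hd].
  set (m := Rmin (d/2) (e*b)).
  assert (Hm : 0 < m) by (apply Rmin_pos; [destruct d; simpl; lra| nra]).
  exists (ln (m / c)). intros s Hs.
  set (y := c * exp s).
  assert (Hy0 : 0 < y) by (unfold y; pose proof (exp_pos s); nra).
  assert (Hym : y <= m).
  { unfold y. apply Rmult_le_reg_l with (/c). apply Rinv_0_lt_compat; auto.
    rewrite <- Rmult_assoc, Rinv_l, Rmult_1_l by lra.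
    replace (/ c * m) with (m / c) by (field; lra). rewrite <- (exp_ln (m/c)).
    apply exp_le_mono; auto. apply Rdiv_lt_0_compat; auto. }
  pose proof (Rmin_l (d/2) (e*b)). pose proof (Rmin_r (d/2) (e*b)). fold m in H, H0.
  assert (Hball : ball 0 d y).
  { unfold ball; simpl. unfold AbsRing_ball, minus, plus, opp, abs; simpl.
    rewrite Ropp_0, Rplus_0_r, Rabs_pos_eq by lra. destruct d; simpl in *; lra. }
  specialize (Hd y Hball Hy0).
  unfold ball in Hd; simpl in Hd. unfold AbsRing_ball, minus, plus, opp, abs in Hd; simpl in Hd.
  rewrite Ropp_0, Rplus_0_r, Hf0 in Hd.
  replace ((f y - b) / y) with ((f y - b) * / y) in Hd by reflexivity.
  rewrite Rabs_mult, Rabs_inv, (Rabs_pos_eq y) in Hd by lra.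
  assert (Rabs (f y - b) < y).
  { apply Rmult_lt_reg_r with (/ y). apply Rinv_0_lt_compat; auto. rewrite Rinv_r by lra. lra. }
  replace (f y / b - 1) with ((f y - b) / b) by (field; lra).
  unfold Rdiv. rewrite Rabs_mult, Rabs_inv, (Rabs_pos_eq b) by lra.
  apply Rmult_le_reg_r with b. auto. rewrite Rmult_assoc, Rinv_l by lra. lra.
Qed.

Lemma NN_bd p x : 0 < p <= 1 -> 1/2 <= x <= 3/2 -> Rabs (NN p x) <= 8.
Proof.
  intros Hp Hx. unfold NN. rewrite rpow0_pos by lra. rewrite Rabs_pos_eq by (left; apply exp_pos).
  assert (Hl2 : 0 < ln 2) by (rewrite <- ln_1; apply ln_increasing; lra).
  assert (ln x <= ln 2) by (apply ln_le; lra).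
  apply Rle_trans with (exp (3 * ln 2)).
  apply exp_le_mono. destruct (Rle_lt_dec (ln x) 0); nra.
  replace (3 * ln 2) with (ln 2 + ln 2 + ln 2) by ring. rewrite !exp_plus, exp_ln; lra.
Qed.

Lemma VG_to_0 p lam eps (G dG : R -> R) : 0 < p <= 1 -> 0 < eps <= 1 ->
  (forall s, is_derive G s (dG s)) ->
  (forall s, is_derive (fun s => exp (2/p*s) * dG s) s
       (exp ((2/p+2)*s) * (eps^2 * exp (2*s) * G s - eps * lam * G s - NN p (G s)))) ->
  (forall e, 0 < e -> exists s1, forall s, s <= s1 -> Rabs (G s - 1) <= e) ->
  forall e, 0 < e -> exists s2, forall s, s <= s2 -> Rabs (exp (2/p*s) * dG s) <= e.
Proof.
  intros Hp He HG HV HG1.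
  destruct (HG1 (1/2)) as [s1 Hs1]. lra.
  set (s1' := Rmin s1 0). assert (Hs1' : s1' <= s1) by apply Rmin_l. assert (Hs10 : s1' <= 0) by apply Rmin_r.
  set (k1 := 2/p+2). assert (Hk1 : 0 < k1) by (unfold k1; assert (0 < 2/p) by (apply Rdiv_lt_0_compat; lra); lra).
  set (M0 := 2*(eps^2 + eps*Rabs lam) + 8).
  assert (HM0 : 0 <= M0). { unfold M0. pose proof (Rabs_pos lam). assert (0 <= eps^2) by apply pow2_ge_0. nra. }
  apply (sing G dG (2/p) k1 (M0/k1) s1'); auto.
  - apply Rdiv_lt_0_compat; lra.
  - apply Rdiv_le_0_compat; lra.
  - intros sg s Hsg Hs.
    assert (Hd : forall t, t <= s1' -> Rabs (exp (k1*t) * (eps^2 * exp (2*t) * G t - eps * lam * G t - NN p (G t))) <= M0 * exp (k1 * t)).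
    { intros t Ht. specialize (Hs1 t ltac:(lra)). apply abs_le_inv in Hs1.
      rewrite Rabs_mult, Rabs_pos_eq by (left; apply exp_pos). rewrite Rmult_comm.
      apply Rmult_le_compat_r. left; apply exp_pos.
      assert (exp (2*t) <= 1) by (rewrite <- exp_0; apply exp_le_mono; lra).
      pose proof (exp_pos (2*t)).
      pose proof (NN_bd p (G t) Hp ltac:(lra)).
      eapply Rle_trans. apply Rabs_triang. eapply Rle_trans. apply Rplus_le_compat_r. apply Rabs_triang.
      rewrite Rabs_Ropp, Rabs_Ropp, !Rabs_mult. rewrite (Rabs_pos_eq eps), (Rabs_pos_eq (eps^2)), (Rabs_pos_eq (exp (2*t))) by (try apply pow2_ge_0; lra).
      assert (Rabs (G t) <= 2) by (rewrite Rabs_pos_eq; lra).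
      assert (0 <= eps^2) by apply pow2_ge_0. pose proof (Rabs_pos lam). pose proof (Rabs_pos (G t)).
      unfold M0.
      assert (eps ^ 2 * exp (2 * t) * Rabs (G t) <= eps^2 * 2).
      { rewrite Rmult_assoc. apply Rmult_le_compat_l. lra. nra. }
      assert (eps * Rabs lam * Rabs (G t) <= eps * Rabs lam * 2) by (apply Rmult_le_compat_l; nra).
      lra. }
    assert (Hside : forall sgn, sgn = 1 \/ sgn = -1 ->
       sgn * (exp (2/p*s) * dG s - exp (2/p*sg) * dG sg) <= M0 / k1 * exp (k1 * s)).
    { intros sgn Hsgn.
      assert (Hm : M0/k1 * exp (k1*sg) - sgn * (exp (2/p*sg) * dG sg) <= M0/k1 * exp (k1*s) - sgn * (exp (2/p*s) * dG s)).
      { apply (mono_deriv (fun t => M0/k1 * exp (k1*t) - sgn * (exp (2/p*t) * dG t))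
           (fun t => M0/k1 * (k1 * exp (k1*t)) - sgn * (exp ((2/p+2)*t) * (eps^2 * exp (2*t) * G t - eps * lam * G t - NN p (G t))))); auto.
        - intros t Ht. apply (is_derive_minus (fun t => M0/k1 * exp (k1*t)) (fun t => sgn * (exp (2/p*t) * dG t))).
          apply (is_derive_scal (fun t => exp (k1*t)) t (M0/k1)). auto_derive; auto; ring.
          apply (is_derive_scal (fun t => exp (2/p*t) * dG t) t sgn). apply HV.
        - intros t Ht. specialize (Hd t ltac:(lra)). fold k1 in Hd. apply abs_le_inv in Hd.
          replace (M0 / k1 * (k1 * exp (k1 * t))) with (M0 * exp (k1*t)) by (field; lra).
          fold k1. destruct Hsgn as [-> | ->]; lra. }
      pose proof (exp_pos (k1*sg)). assert (0 <= M0/k1) by (apply Rdiv_le_0_compat; lra).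
      assert (0 <= M0/k1 * exp (k1*sg)) by (apply Rmult_le_pos; lra). lra. }
    pose proof (Hside 1 (or_introl eq_refl)). pose proof (Hside (-1) (or_intror eq_refl)).
    apply Rabs_le. lra.
  - intros sg s Hsg Hs. pose proof (Hs1 s ltac:(lra)). pose proof (Hs1 sg ltac:(lra)).
    apply abs_le_inv in H. apply abs_le_inv in H0. apply Rabs_le. lra.
Qed.

Lemma exp_le1 x : x <= 0 -> exp x <= 1.
Proof. intros. rewrite <- exp_0. apply exp_le_mono; auto. Qed.
Lemma exp_ge1 x : 0 <= x -> 1 <= exp x.
Proof. intros. rewrite <- exp_0. apply exp_le_mono; auto. Qed.

Lemma Psi_deriv p f x : 0 < p -> ex_derive f (exp x) ->
  is_derive (Psi p f) x (/p * exp (x/p) * f (exp x) + exp (x/p) * (exp x * Derive f (exp x))).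
Proof.
  intros Hp [df Hdf]. unfold Psi. auto_derive. exists df; exact Hdf.
  change (Derive (fun x0 : R => f x0) (exp x)) with (Derive f (exp x)). match goal with |- ?a = ?b => change (@eq R a b) end. unfold Rdiv. ring.
Qed.

Lemma Theta_eq p t : Theta_h p t = exp (t/p) * qf p t.
Proof.
  unfold Theta_h, qf, Rpower, Rdiv. rewrite <- exp_Ropp. f_equal. f_equal. ring.
Qed.

Lemma Theta_deriv p t : 0 < p ->
  is_derive (Theta_h p) t (/p * exp (t/p) * qf p t + exp (t/p) * dqf p t).
Proof.
  intros Hp. apply is_derive_ext with (fun t => exp (t/p) * qf p t).
  intros; symmetry; apply Theta_eq.
  assert (H1 : is_derive (fun t => exp (t/p)) t (/p * exp (t/p))) by (auto_derive; auto; match goal with |- ?a = ?b => change (@eq R a b) end; unfold Rdiv; ring).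
  pose proof (is_derive_mult _ _ t _ _ H1 (qf_deriv p t Hp) (fun n m => Rmult_comm n m)) as H3.
  simpl in H3. unfold mult, plus in H3; simpl in H3. exact H3.
Qed.

Theorem mainTheorem3 (p lam : R) (hp0 : 0 < p) (hp1 : p <= 1)
  (T a : R) (hT : 0 < T) (ha0 : 0 < a) (ha1 : a < p / (1 + p)) :
  exists bTa CTa : R, 0 < bTa /\ 0 < CTa /\
    forall (b : R) (f : R -> R), bTa <= b -> is_classical_sol p lam b f ->
      forall t : R, t <= T + a * p * ln b ->
        Rabs (Psi p f (t - p * ln b) - Theta_h p t)
          <= CTa * Rpower b (- 2 * p * (1 - a)) * exp (t / p) /\
        Rabs (Derive (Psi p f) (t - p * ln b) - Derive (Theta_h p) t)
          <= CTa * Rpower b (- 2 * p * (1 - a)) * exp (t / p).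
Proof.
  set (al := alpha p). set (c1 := 4*(2*p+1)). set (k := c1/al^2).
  assert (Hal : 0 < al <= 1) by (split; [apply alpha_pos; lra| apply alpha_le1; lra]).
  assert (Hk : 0 <= k) by (unfold k, c1; apply Rdiv_le_0_compat; [lra| apply pow_lt; lra]).
  set (K := 1 + exp k * (exp (4*T) + Rabs lam * exp (2*T)) / 2).
  assert (HK : 1 <= K).
  { unfold K. pose proof (exp_pos k). pose proof (exp_pos (4*T)). pose proof (exp_pos (2*T)).
    pose proof (Rabs_pos lam). assert (0 <= Rabs lam * exp (2*T)) by (apply Rmult_le_pos; lra).
    assert (0 <= exp k * (exp (4 * T) + Rabs lam * exp (2 * T))) by (apply Rmult_le_pos; lra). lra. }
  set (K3 := exp (-(1/p) * ln (1 + al * exp (2*T)))).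
  assert (HK3 : 0 < K3) by apply exp_pos.
  set (gam := 2*p - 2*a*(1+p)).
  assert (Hgam : 0 < gam).
  { unfold gam. assert (a * (1+p) < p).
    { apply Rmult_lt_reg_r with (/(1+p)). apply Rinv_0_lt_compat; lra.
      replace (a * (1 + p) * / (1 + p)) with a by (field; lra). exact ha1. }
    lra. }
  exists (exp (ln (K/K3 + 1) / gam)), (K * (1 + /p + k + 2)).
  split. apply exp_pos. split.
  { assert (0 < /p) by (apply Rinv_0_lt_compat; lra). apply Rmult_lt_0_compat; lra. }
  intros b f Hb Hsol t Ht.
  assert (HKK : 0 < K / K3 + 1) by (assert (0 < K/K3) by (apply Rdiv_lt_0_compat; lra); lra).
  assert (Hb0 : 0 < b) by (eapply Rlt_le_trans; [apply exp_pos| exact Hb]).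
  assert (Hlnb : ln (K/K3 + 1) / gam <= ln b).
  { rewrite <- (ln_exp (ln (K / K3 + 1) / gam)). apply ln_le; auto. apply exp_pos. }
  assert (Hl1 : 0 < ln (K/K3+1)).
  { rewrite <- ln_1. apply ln_increasing. lra. assert (0 < K/K3) by (apply Rdiv_lt_0_compat; lra); lra. }
  assert (Hlb : 0 <= ln b).
  { assert (0 <= ln (K/K3+1)/gam) by (apply Rdiv_le_0_compat; lra). lra. }
  set (c := exp (-p*ln b)). set (eps := exp (-2*p*ln b)).
  set (E1 := exp (-2*p*(1-a)*ln b)). set (smax := T + a*p*ln b). set (Z := exp (2*smax)).
  assert (Heps : 0 < eps <= 1).
  { split. apply exp_pos. unfold eps. apply exp_le1. nra. }
  assert (HE1 : 0 < E1 <= 1).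
  { split. apply exp_pos. unfold E1. apply exp_le1.
    assert (0 < 1 - a) by (assert (p/(1+p) < 1) by (apply Rmult_lt_reg_r with (1+p); [lra|]; unfold Rdiv; rewrite Rmult_assoc, Rinv_l; lra); lra).
    assert (0 <= p * (1 - a) * ln b) by (apply Rmult_le_pos; [apply Rmult_le_pos|]; lra). nra. }
  set (G := fun s => f (c * exp s) / b).
  set (dG := fun s => c * exp s / b * Derive f (c * exp s)).
  destruct (ode_setup p lam b f hp0 Hb0 Hsol) as [HG HV].
  pose proof (G_to_1 p lam b f c Hb0 (exp_pos _) Hsol) as HG1.
  pose proof (VG_to_0 p lam eps G dG (conj hp0 hp1) Heps HG HV HG1) as HV0.
  assert (HX : eps * Z = exp (2*T) * E1).
  { unfold eps, Z, E1, smax. rewrite <- !exp_plus. f_equal. ring. }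
  set (BZ := 2 * (eps ^ 2 * Z + eps * Rabs lam) * exp (4 * (2 * p + 1) / alpha p ^ 2) / 4 * Z).
  assert (HBZ : BZ = exp k * ((eps*Z)^2 + Rabs lam * (eps * Z)) / 2).
  { unfold BZ, k, c1, al. field. }
  assert (HBZ0 : 0 <= BZ).
  { rewrite HBZ. assert (0 <= eps * Z) by (rewrite HX; pose proof (exp_pos (2*T)); nra).
    pose proof (Rabs_pos lam). pose proof (exp_pos k).
    assert (0 <= (eps*Z)^2 + Rabs lam * (eps*Z)) by (pose proof (pow2_ge_0 (eps*Z)); nra). nra. }
  assert (HAB : E1 + BZ <= K * E1).
  { rewrite HBZ, HX. unfold K.
    assert (e4 : exp (4*T) = exp (2*T) ^ 2) by (rewrite <- exp2; f_equal; ring).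
    rewrite e4. pose proof (exp_pos (2*T)). pose proof (exp_pos k). pose proof (Rabs_pos lam).
    set (x := exp (2*T)) in *.
    assert ((x * E1)^2 <= x^2 * E1).
    { replace ((x*E1)^2) with (x^2 * (E1 * E1)) by ring. apply Rmult_le_compat_l. apply pow2_ge_0. nra. }
    assert (exp k * ((x * E1) ^ 2 + Rabs lam * (x * E1)) <= exp k * ((x ^ 2 + Rabs lam * x) * E1)).
    { apply Rmult_le_compat_l. lra. nra. }
    nra. }
  assert (Hgap : E1 + BZ < exp (-(1/p) * ln (1 + alpha p * Z))).
  { apply Rle_lt_trans with (K * E1); auto.
    set (P := exp (2*a*p*ln b)).
    assert (HP : 1 <= P). { unfold P. apply exp_ge1.
      assert (0 <= a * p * ln b) by (apply Rmult_le_pos; [apply Rmult_le_pos|]; lra). lra. }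
    assert (HZP : Z = exp (2*T) * P). { unfold Z, P, smax. rewrite <- exp_plus. f_equal. ring. }
    assert (Hln : ln (1 + al * Z) <= ln (1 + al * exp (2*T)) + 2*a*p*ln b).
    { rewrite <- (ln_exp (2*a*p*ln b)). fold P. rewrite <- ln_mult.
      apply ln_le. pose proof (exp_pos (2*smax)). fold Z in H. nra.
      rewrite HZP. pose proof (exp_pos (2*T)). nra. pose proof (exp_pos (2*T)); nra. lra. }
    assert (H1 : K3 * exp (-2*a*ln b) <= exp (-(1/p) * ln (1 + alpha p * Z))).
    { unfold K3. rewrite <- exp_plus. apply exp_le_mono. fold al.
      assert (0 < 1/p) by (apply Rdiv_lt_0_compat; lra).
      replace (-2*a*ln b) with (-(1/p) * (2*a*p*ln b)) by (field; lra). nra. }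
    eapply Rlt_le_trans; [|exact H1].
    assert (HE1' : E1 = exp (-2*a*ln b) * exp (-(gam * ln b))).
    { unfold E1, gam. rewrite <- exp_plus. f_equal. ring. }
    assert (Hg : K/K3 + 1 <= exp (gam * ln b)).
    { rewrite <- (exp_ln (K/K3+1)) by auto. apply exp_le_mono.
      apply Rmult_le_reg_r with (/gam). apply Rinv_0_lt_compat; auto.
      replace (gam * ln b * / gam) with (ln b) by (field; lra). exact Hlnb. }
    rewrite HE1'. rewrite exp_Ropp.
    pose proof (exp_pos (-2*a*ln b)). pose proof (exp_pos (gam * ln b)).
    assert (K < K3 * exp (gam * ln b)).
    { apply Rlt_le_trans with (K3 * (K/K3 + 1)). replace (K3 * (K/K3+1)) with (K + K3) by (field; lra). lra.
      apply Rmult_le_compat_l; lra. }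
    replace (K * (exp (-2 * a * ln b) * / exp (gam * ln b))) with (exp (-2 * a * ln b) * (K / exp (gam * ln b))) by (field; lra).
    rewrite (Rmult_comm K3). apply Rmult_lt_compat_l; auto.
    apply Rmult_lt_reg_r with (exp (gam * ln b)); auto.
    unfold Rdiv. rewrite Rmult_assoc, Rinv_l by lra. lra. }
  assert (HZ : exp (2*smax) <= Z) by (unfold Z; lra).
  pose proof (core p lam eps E1 Z smax G dG (conj hp0 hp1) Heps (proj1 HE1) HZ Hgap HG HV HG1 HV0 t Ht) as [Hu Hdu].
  fold BZ in Hu, Hdu.
  assert (HPsi : Psi p f (t - p * ln b) = exp (t/p) * G t).
  { unfold Psi, G. replace ((t - p * ln b)/p) with (t/p + - ln b) by (field; lra).
    replace (t - p * ln b) with (-p * ln b + t) by ring.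
    rewrite !exp_plus, exp_Ropp, exp_ln by auto. unfold c. unfold Rdiv. ring. }
  assert (Hex : ex_derive f (exp (t - p * ln b))).
  { destruct Hsol as [Hode _]. apply (Hode _ (exp_pos _)). }
  rewrite (is_derive_unique _ _ _ (Psi_deriv p f _ hp0 Hex)).
  rewrite (is_derive_unique _ _ _ (Theta_deriv p t hp0)).
  rewrite HPsi, Theta_eq.
  assert (Hexp1 : exp ((t - p * ln b)/p) = exp (t/p) / b).
  { replace ((t - p * ln b)/p) with (t/p + - ln b) by (field; lra).
    rewrite exp_plus, exp_Ropp, exp_ln by auto. reflexivity. }
  assert (Hexp2 : exp (t - p * ln b) = c * exp t).
  { replace (t - p * ln b) with (-p * ln b + t) by ring. rewrite exp_plus. reflexivity. }
  rewrite Hexp1, Hexp2.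
  assert (HR : Rpower b (- 2 * p * (1 - a)) = E1).
  { unfold Rpower, E1. f_equal; ring. }
  rewrite HR.
  set (C := K * (1 + / p + k + 2)).
  assert (Hip : 0 < /p) by (apply Rinv_0_lt_compat; lra).
  assert (Het : 0 < exp (t/p)) by apply exp_pos.
  replace (exp (t / p) * G t - exp (t / p) * qf p t) with (exp (t/p) * (G t - qf p t)) by ring.
  replace (/ p * (exp (t / p) / b) * f (c * exp t) + exp (t / p) / b * (c * exp t * Derive f (c * exp t)) -
     (/ p * exp (t / p) * qf p t + exp (t / p) * dqf p t))
    with (exp (t/p) * (/p * (G t - qf p t) + (dG t - dqf p t))) by (unfold G, dG; field; lra).
  rewrite !Rabs_mult, (Rabs_pos_eq (exp (t/p))) by lra.
  assert (HE1K : E1 + BZ <= K * E1) by exact HAB.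
  assert (Hk2 : 4 * (2 * p + 1) / alpha p ^ 2 = k) by reflexivity. rewrite Hk2 in Hdu.
  split.
  - rewrite (Rmult_comm (exp (t/p))). apply Rmult_le_compat_r. lra.
    apply Rle_trans with (K * E1). lra. unfold C.
    assert (0 <= K * E1 * (/p + k + 2)) by (apply Rmult_le_pos; [nra|lra]). nra.
  - rewrite (Rmult_comm (exp (t/p))). apply Rmult_le_compat_r. lra.
    eapply Rle_trans. apply Rabs_triang. rewrite Rabs_mult, (Rabs_pos_eq (/p)) by lra.
    assert (/ p * Rabs (G t - qf p t) <= /p * (K * E1)) by (apply Rmult_le_compat_l; lra).
    assert (k * (E1 + BZ) <= k * (K * E1)) by (apply Rmult_le_compat_l; lra).
    assert (2 * BZ <= 2 * (K * E1)) by lra.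
    unfold C. nra.
Qed.
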